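(* For an integer $i\ge0$ let $i_0i_1i_2\dots$ be its base-3 digits, least significant first. Define $w_i=-1$ if the first digit in this sequence different from $1$ is $2$, and $w_i=1$ otherwise; define $a_i=3^{m}$, where $m$ is the number of initial digits equal to $1$, i.e. the largest $m\ge0$ with $i_0=\dots=i_{m-1}=1$. Let $p_0=0$ and $p_n=\sum_{i=0}^{n-1}w_ia_i$ for $n\ge1$. Let $N_2$ be the set of non-negative integers whose base-3 representation does not use the digit $2$, and for $n\ge0$ let $\ell_n=\ell_n^++\ell_n^-$, where $\ell_n^+,\ell_n^-$ are the unique non-negative integers with $\ell_n^+,\ell_n^-,\ell_n^++\ell_n^-\in N_2$ and $n=\ell_n^+-\ell_n^-$. Then $p_n=\ell_n$ for all $n\ge0$.
   Context: The sequence $(w_i)$ is the sequence $1,1,-1,1,1,-1,1,-1,-1,\dots$ (the final-state output of a ternary automaton), and $(a_i)$ is the sequence $1,3,1,1,9,1,\dots$ (a transducer integer sequence); the definitions above are the explicit descriptions of these. *)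

(* Defs.v *)
From mathcomp Require Import all_boot all_order all_algebra.
Set Implicit Arguments. Unset Strict Implicit. Unset Printing Implicit Defensive.
Import Order.TTheory GRing.Theory Num.Theory.

Definition digit3 (x k : nat) : nat := (x %/ 3 ^ k) %% 3.

(* number of initial (least significant) base-3 digits equal to 1, computed
   with fuel; fuel i.+1 suffices since x %/ 3 < x for x > 0 and digit of 0 is 0 *)
Fixpoint ones_fuel (f x : nat) : nat :=
  match f with
  | 0 => 0
  | f'.+1 => if x %% 3 == 1 then (ones_fuel f' (x %/ 3)).+1 else 0
  end.

Definition ones3 (i : nat) : nat := ones_fuel i.+1 i.

Definition w (i : nat) : int := if digit3 i (ones3 i) == 2 then (-1)%R else 1%R.

Definition a (i : nat) : int := (3 ^ ones3 i)%:Z.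

Definition p (n : nat) : int := (\sum_(i < n) w i * a i)%R.

Definition N2 (x : nat) : Prop := forall k : nat, digit3 x k <> 2.

(* Main.v *)
Require Import Defs.
From mathcomp Require Import all_boot all_order all_algebra.
From mathcomp Require Import zify ring.
Import Order.TTheory GRing.Theory Num.Theory.

Lemma digit_shift x r k : r < 3 -> digit3 (3 * x + r) k.+1 = digit3 x k.
Proof.
move=> hr; rewrite /digit3 expnS divnMA; congr (_ %% 3); congr (_ %/ _).
rewrite mulnC divnMDl // divn_small // addn0.
by [].
Qed.

Lemma digit_0 x r : r < 3 -> digit3 (3 * x + r) 0 = r.
Proof. move=> hr; rewrite /digit3 expn0 divn1 mulnC modnMDl modn_small //. Qed.

Lemma N2_split x : N2 x -> exists a r, x = 3 * a + r /\ r <= 1 /\ N2 a.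
Proof.
move=> h; exists (x %/ 3), (x %% 3).
have ex : x = 3 * (x %/ 3) + x %% 3 by rewrite mulnC -divn_eq.
have lt : x %% 3 < 3 by rewrite ltn_mod.
move: ex lt h; set q := x %/ 3; set r := x %% 3 => ex lt h.
split; first exact ex.
split.
- have := h 0; rewrite ex digit_0 //; lia.
- move=> k; have := h k.+1; rewrite ex digit_shift //.
Qed.

Lemma N2_build a r : N2 a -> r <= 1 -> N2 (3 * a + r).
Proof.
move=> h hr [|k]; first by rewrite digit_0; lia.
rewrite digit_shift //; lia.
Qed.

Lemma N2_0 : N2 0.
Proof. by move=> k; rewrite /digit3 div0n mod0n. Qed.

Definition rep n lp lm := N2 lp /\ N2 lm /\ N2 (lp + lm) /\ n + lm = lp.

Lemma rep_dec n lp lm : rep n lp lm -> exists a b m,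
  ((n = 3 * m /\ lp = 3 * a /\ lm = 3 * b /\ rep m a b) \/
   (n = 3 * m + 1 /\ lp = 3 * a + 1 /\ lm = 3 * b /\ rep m a b) \/
   (n = 3 * m + 2 /\ lp = 3 * a /\ lm = 3 * b + 1 /\ rep m.+1 a b)).
Proof.
move=> [hp [hm [hs he]]].
have [a [r [ea [hr ha]]]] := N2_split _ hp.
have [b [s [eb [hs' hb]]]] := N2_split _ hm.
have hab : N2 (a + b).
  move=> k; have := hs k.+1.
  have -> : lp + lm = 3 * (a + b) + (r + s) by lia.
  by rewrite digit_shift //; lia.
have hrs : r + s <> 2.
  have := hs 0.
  have -> : lp + lm = 3 * (a + b) + (r + s) by lia.
  by rewrite digit_0 //; lia.
exists a, b.
have [r0|r1] : r = 0 \/ r = 1 by lia.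
- have [s0|s1] : s = 0 \/ s = 1 by lia.
  + exists (a - b); left; split; first lia. split; first lia. split; first lia.
    repeat split => //; lia.
  + exists (a - b - 1); right; right; split; first lia. split; first lia. split; first lia.
    repeat split => //; lia.
- have s0 : s = 0 by lia.
  exists (a - b); right; left; split; first lia. split; first lia. split; first lia.
  repeat split => //; lia.
Qed.

Lemma rep_uniq K : forall n lp lm lp' lm', lp + lp' <= K ->
  rep n lp lm -> rep n lp' lm' -> lp = lp' /\ lm = lm'.
Proof.
elim: K => [|K IH] n lp lm lp' lm' hK h h'.
  case: h => [_ [_ [_ e]]]; case: h' => [_ [_ [_ e']]]; lia.
have [a [b [m H]]] := rep_dec _ _ _ h.
have [a' [b' [m' H']]] := rep_dec _ _ _ h'.
case: H => [[e1 [e2 [e3 hr]]]|[[e1 [e2 [e3 hr]]]|[e1 [e2 [e3 hr]]]]];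
case: H' => [[f1 [f2 [f3 hr']]]|[[f1 [f2 [f3 hr']]]|[f1 [f2 [f3 hr']]]]];
  try lia.
- have em : m' = m by lia. subst m'.
  have [z|nz] : a + a' = 0 \/ a + a' > 0 by lia.
  + case: hr => [_ [_ [_ x]]]; case: hr' => [_ [_ [_ y]]]; lia.
  + have [E1 E2] := IH m a b a' b' ltac:(lia) hr hr'; lia.
- have em : m' = m by lia. subst m'.
  have [E1 E2] := IH m a b a' b' ltac:(lia) hr hr'; lia.
- have em : m' = m by lia. subst m'.
  have [z|nz] : a + a' = 0 \/ a + a' > 0 by lia.
  + case: hr => [_ [_ [_ x]]]; case: hr' => [_ [_ [_ y]]]; lia.
  + have [E1 E2] := IH m.+1 a b a' b' ltac:(lia) hr hr'; lia.
Qed.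

Lemma rep_ex K : forall n, n <= K -> exists lp lm, rep n lp lm.
Proof.
elim: K => [|K IH] n hn.
  have -> : n = 0 by lia.
  exists 0, 0; repeat split; try exact N2_0; lia.
have [z|nz] : n = 0 \/ n > 0 by lia.
  subst n; exists 0, 0; repeat split; try exact N2_0; lia.
have ed : n = 3 * (n %/ 3) + n %% 3 by rewrite mulnC -divn_eq.
have lt : n %% 3 < 3 by rewrite ltn_mod.
move: ed lt; set q := n %/ 3; set r := n %% 3 => ed lt.
have [r0|[r1|r2]] : r = 0 \/ r = 1 \/ r = 2 by lia.
- have [lp [lm [h1 [h2 [h3 h4]]]]] := IH q ltac:(lia).
  exists (3 * lp + 0), (3 * lm + 0); split; first exact: N2_build.
  split; first exact: N2_build.
  split; last lia.
  have -> : 3 * lp + 0 + (3 * lm + 0) = 3 * (lp + lm) + 0 by lia.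
  exact: N2_build.
- have [lp [lm [h1 [h2 [h3 h4]]]]] := IH q ltac:(lia).
  exists (3 * lp + 1), (3 * lm + 0); split; first exact: N2_build.
  split; first exact: N2_build.
  split; last lia.
  have -> : 3 * lp + 1 + (3 * lm + 0) = 3 * (lp + lm) + 1 by lia.
  exact: N2_build.
- have [lp [lm [h1 [h2 [h3 h4]]]]] := IH q.+1 ltac:(lia).
  exists (3 * lp + 0), (3 * lm + 1); split; first exact: N2_build.
  split; first exact: N2_build.
  split; last lia.
  have -> : 3 * lp + 0 + (3 * lm + 1) = 3 * (lp + lm) + 1 by lia.
  exact: N2_build.
Qed.

Lemma ones_fuel_stable f1 : forall f2 x, x < f1 -> x < f2 -> ones_fuel f1 x = ones_fuel f2 x.
Proof.
elim: f1 => [|f1 IH] [|f2] x h1 h2 //=.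
case: ifP => // hx; congr S; apply: IH.
- have : x %% 3 = 1 by apply/eqP.
  move=> e; have ed : x = 3 * (x %/ 3) + x %% 3 by rewrite mulnC -divn_eq.
  lia.
- have : x %% 3 = 1 by apply/eqP.
  move=> e; have ed : x = 3 * (x %/ 3) + x %% 3 by rewrite mulnC -divn_eq.
  lia.
Qed.

Lemma mod3 q r : r < 3 -> (3 * q + r) %% 3 = r.
Proof. move=> h; rewrite mulnC modnMDl modn_small //. Qed.
Lemma div3 q r : r < 3 -> (3 * q + r) %/ 3 = q.
Proof. move=> h; rewrite mulnC divnMDl // divn_small // addn0 //. Qed.

Lemma ones3_0 q r : r < 3 -> r != 1 -> ones3 (3 * q + r) = 0.
Proof. by move=> h h1; rewrite /ones3 /= mod3 // (negbTE h1). Qed.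

Lemma ones3_1 q : ones3 (3 * q + 1) = (ones3 q).+1.
Proof.
rewrite /ones3 [ones_fuel _ _]/= mod3 // eqxx div3 //; congr S.
apply: ones_fuel_stable; lia.
Qed.

Definition g i := (w i * a i)%R.

Lemma g0 q : g (3 * q) = 1%R.
Proof.
rewrite /g /w /a.
have E := ones3_0 q 0 erefl erefl. rewrite addn0 in E. rewrite E.
have := digit_0 q 0 erefl. rewrite addn0 => ->. by [].
Qed.

Lemma g2 q : g (3 * q + 2) = (-1)%R.
Proof.
rewrite /g /w /a (ones3_0 q 2 erefl erefl) digit_0 //.
Qed.

Lemma g1 q : g (3 * q + 1) = (3 * g q)%R.
Proof.
rewrite /g /w /a ones3_1 digit_shift // expnS PoszM.
case: ifP => _; rewrite /=; ring.
Qed.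

Lemma pS n : p n.+1 = (p n + g n)%R.
Proof. by rewrite /p big_ord_recr. Qed.

Lemma p3 q : p (3 * q) = (3 * p q)%R.
Proof.
elim: q => [|q IH]; first by rewrite /p !big_ord0 mulr0.
have E3 : 3 * q.+1 = (3 * q + 2).+1 by lia.
have E2 : 3 * q + 2 = (3 * q + 1).+1 by lia.
have E1 : 3 * q + 1 = (3 * q).+1 by lia.
rewrite E3 pS E2 pS E1 pS -E1 -E2 g2 g1 g0 IH pS. ring.
Qed.

Lemma p_rep K : forall n lp lm, n <= K -> rep n lp lm -> p n = Posz (lp + lm).
Proof.
elim: K => [|K IH] n lp lm hn h.
  have n0 : n = 0 by lia. subst n.
  have r0 : rep 0 0 0 by repeat split; try exact N2_0.
  have [E1 E2] := rep_uniq (lp + 0) 0 lp lm 0 0 (leqnn _) h r0.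
  by subst; rewrite /p big_ord0.
have [n0|nz] : n = 0 \/ n > 0 by lia.
  subst n.
  have r0 : rep 0 0 0 by repeat split; try exact N2_0.
  have [E1 E2] := rep_uniq (lp + 0) 0 lp lm 0 0 (leqnn _) h r0.
  by subst; rewrite /p big_ord0.
have [a' [b [m H]]] := rep_dec _ _ _ h.
case: H => [[e1 [e2 [e3 hr]]]|[[e1 [e2 [e3 hr]]]|[e1 [e2 [e3 hr]]]]]; subst.
- rewrite p3 (IH m a' b ltac:(lia) hr). lia.
- have E1 : 3 * m + 1 = (3 * m).+1 by lia.
  rewrite E1 pS g0 p3 (IH m a' b ltac:(lia) hr). lia.
- have E3 : 3 * m.+1 = (3 * m + 2).+1 by lia.
  have H : p (3 * m.+1) = (p (3 * m + 2) + g (3 * m + 2))%R by rewrite E3 pS.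
  rewrite p3 g2 (IH m.+1 a' b ltac:(lia) hr) in H.
  lia.
Qed.

Theorem mainTheorem7 :
  forall n : nat,
    exists lp lm : nat,
      (N2 lp /\ N2 lm /\ N2 (lp + lm) /\ n + lm = lp) /\
      (forall lp' lm' : nat,
          N2 lp' -> N2 lm' -> N2 (lp' + lm') -> n + lm' = lp' ->
          lp' = lp /\ lm' = lm) /\
      p n = Posz (lp + lm).
Proof.
move=> n.
have [lp [lm h]] := rep_ex n n (leqnn _).
exists lp, lm; split; first exact h.
split.
- move=> lp' lm' h1 h2 h3 h4.
  exact: (rep_uniq (lp' + lp) n lp' lm' lp lm (leqnn _) (conj h1 (conj h2 (conj h3 h4))) h).
- exact: (p_rep n n lp lm (leqnn _) h).
Qed.
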